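(* Let $F:\mathbb{R}\to[0,1]$ be a distribution function. For every $x\in\mathbb{R}$, \[\big(F(x-),F(x)\big)\subseteq\{\alpha\in(0,1):x=F^{\wedge}(\alpha)\}\subseteq\big[F(x-),F(x)\big].\] In particular, if $x_1\neq x_2$ then $\big(F(x_1-),F(x_1)\big)\cap\big(F(x_2-),F(x_2)\big)=\emptyset$. Moreover, \begin{align*} \bigcup_{x\in J_F}\big(F(x-),F(x)\big)&=\{\alpha\in(0,1):\Delta F(F^{\wedge}(\alpha))>0\text{ and }\alpha=F_\lambda(F^{\wedge}(\alpha))\text{ for some }0<\lambda<1\}\\ &=\{F_\lambda(x):0<\lambda<1,\ x\in J_F\}=R_F\big(J_F\times(0,1)\big)\\ &=(0,1)\setminus\big(F(\mathbb{R})\cup F^{-}(\mathbb{R})\big), \end{align*} where the union is disjoint. Consequently, writing $J_F=\{x_n:n\in M\}$ with pairwise distinct $x_n$, where $M=\{1,\dots,m\}$ is finite or $M=\mathbb{N}$, the map \[\Phi_F:(0,1)^M\to\prod_{n\in M}\big(F(x_n-),F(x_n)\big),\qquad (\lambda_n)_{n\in M}\mapsto \big(F_{\lambda_n}(x_n)\big)_{n\in M}\] is well defined and bijective, with inverse \[\Phi_F^{-1}\big((\alpha_n)_{n\in M}\big)=\Big(\frac{\alpha_n-F(F^{\wedge}(\alpha_n)-)}{\Delta F(F^{\wedge}(\alpha_n))}\Big)_{n\in M}.\]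
   Context: A distribution function is a non-decreasing, right-continuous $F:\mathbb{R}\to[0,1]$ with $\lim_{x\to-\infty}F(x)=0$, $\lim_{x\to\infty}F(x)=1$. Write $F(x-)=\lim_{z\uparrow x}F(z)$, $\Delta F(x)=F(x)-F(x-)$, and $F^{-}:\mathbb{R}\to[0,1]$, $x\mapsto F(x-)$. $J_F=\{x\in\mathbb{R}:\Delta F(x)>0\}$ is the (at most countable) set of jumps of $F$. For $\lambda\in[0,1]$, $F_\lambda(x)=F(x-)+\lambda\Delta F(x)$, and the Rüschendorf transform is $R_F:\mathbb{R}\times[0,1]\to\mathbb{R}$, $R_F(x,\lambda)=F_\lambda(x)$. For $\alpha\in(0,1)$, $F^{\wedge}(\alpha)=\inf\{x\in\mathbb{R}:F(x)\ge\alpha\}$. *)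

(* Defs.v *)
From HB Require Import structures.
From mathcomp Require Import all_boot all_order all_algebra.
From mathcomp Require Import all_classical all_reals all_analysis.
Set Implicit Arguments. Unset Strict Implicit. Unset Printing Implicit Defensive.
Import Order.TTheory GRing.Theory Num.Theory.
Import numFieldNormedType.Exports.
Local Open Scope classical_set_scope.
Local Open Scope ring_scope.

Section DistrDefs.
Variable R : realType.
Implicit Types (F : R -> R) (x a l : R).

Definition distribution_function F : Prop :=
  [/\ (forall x, 0 <= F x <= 1),
      {homo F : x y / x <= y},
      (forall x, F z @[z --> x^'+] --> F x),
      F z @[z --> -oo] --> (0 : R) &
      F z @[z --> +oo] --> (1 : R)].

Definition Fleft F x : R := lim (F z @[z --> x^'-]).

Definition Fjump F x : R := F x - Fleft F x.

Definition jumps F : set R := [set x | 0 < Fjump F x].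

Definition Flam F l x : R := Fleft F x + l * Fjump F x.

Definition RF F (p : R * R) : R := Flam F p.2 p.1.

Definition Fwedge F a : R := inf [set x | a <= F x].

Definition unit_oo : set R := [set l | 0 < l < 1].

Definition jump_oo F x : set R := [set a | Fleft F x < a < F x].
Definition jump_cc F x : set R := [set a | Fleft F x <= a <= F x].

End DistrDefs.
Arguments unit_oo {R}.

(* Main.v *)
Require Import Defs.
From HB Require Import structures.
From mathcomp Require Import all_boot all_order all_algebra.
From mathcomp Require Import all_classical all_reals all_analysis.
Import Order.TTheory GRing.Theory Num.Theory.
Import numFieldNormedType.Exports.
Local Open Scope classical_set_scope.
Local Open Scope ring_scope.

Section L.
Context {R : realType} {F : R -> R}.
Hypothesis hF : distribution_function F.

Let F01 x : 0 <= F x <= 1. Proof. by case: hF. Qed.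
Let Fnd : {homo F : x y / x <= y}. Proof. by case: hF. Qed.
Let Frc x : F z @[z --> x^'+] --> F x. Proof. by case: hF. Qed.
Let Fm : F z @[z --> -oo] --> (0 : R). Proof. by case: hF. Qed.
Let Fp : F z @[z --> +oo] --> (1 : R). Proof. by case: hF. Qed.

Lemma Fleft_cvg x : cvg (F z @[z --> x^'-]).
Proof.
apply: nondecreasing_at_left_is_cvgr.
  by apply: filterE => y a b _ _; exact: Fnd.
apply: filterE => y; exists (F x) => z [s] /=; rewrite in_itv/= => /andP[_ /ltW sx] <-.
exact: Fnd.
Qed.

Lemma Fleft_ge {x z} : z < x -> F z <= Fleft F x.
Proof.
move=> zx; apply: limr_ge; first exact: Fleft_cvg.
by apply: filterS (nbhs_left_gt zx) => t /ltW; exact: Fnd.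
Qed.

Lemma Fleft_le x c : (forall z, z < x -> F z <= c) -> Fleft F x <= c.
Proof.
move=> H; apply: limr_le; first exact: Fleft_cvg.
by apply: filterS (nbhs_left_lt x) => t; exact: H.
Qed.

Lemma Fleft_leF x : Fleft F x <= F x.
Proof. by apply: Fleft_le => z /ltW; exact: Fnd. Qed.

Lemma Fleft_ge0 x : 0 <= Fleft F x.
Proof.
have h : x - 1 < x by rewrite ltrBlDr ltrDl.
case/andP: (F01 (x - 1)) => h0 _; have h2 := Fleft_ge h; exact: le_trans h0 h2.
Qed.

Lemma Fleft_mono {x y} : x <= y -> Fleft F x <= Fleft F y.
Proof.
move=> xy; apply: Fleft_le => z zx; apply: Fleft_ge; exact: lt_le_trans zx xy.
Qed.

Lemma F_le_Fleft {x y} : x < y -> F x <= Fleft F y.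
Proof. exact: Fleft_ge. Qed.

Lemma A_inf {a} : 0 < a < 1 -> has_inf [set x | a <= F x].
Proof.
case/andP=> a0 a1; split.
  have [t /ltW ht] := filter_ex (cvgr_gt (f:=F) _ Fp _ a1).
  by exists t.
have [t ht] := filter_ex (cvgr_lt (f:=F) _ Fm _ a0).
exists t => y /= ay; rewrite leNgt; apply/negP => yt.
have := le_lt_trans (le_trans ay (Fnd _ _ (ltW yt))) ht.
by rewrite ltxx.
Qed.

Lemma W_lb {a x} : 0 < a < 1 -> a <= F x -> Fwedge F a <= x.
Proof. by move=> /A_inf [_ hl] ax; exact: ge_inf hl _ ax. Qed.

Lemma W_lt {a z} : 0 < a < 1 -> z < Fwedge F a -> F z < a.
Proof.
move=> ha zw; rewrite ltNge; apply/negP => az.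
by have := lt_le_trans zw (W_lb ha az); rewrite ltxx.
Qed.

Lemma W_ge {a} : 0 < a < 1 -> a <= F (Fwedge F a).
Proof.
move=> ha; have hi := A_inf ha.
rewrite -(cvg_lim _ (Frc (Fwedge F a))); last exact: Rhausdorff.
apply: limr_ge; first by apply/cvg_ex; eexists; exact: Frc.
apply: filterS (nbhs_right_gt (Fwedge F a)) => t wt.
have ep : 0 < t - Fwedge F a by rewrite subr_gt0.
have [e Ae et] := inf_adherent ep hi.
apply: le_trans Ae (Fnd _ _ _); apply: ltW.
by move: et; rewrite addrC subrK.
Qed.

Lemma W_Fleft {a} : 0 < a < 1 -> Fleft F (Fwedge F a) <= a.
Proof. by move=> ha; apply: Fleft_le => z /(W_lt ha) /ltW. Qed.

Lemma W_eq {a x} : 0 < a < 1 -> a <= F x -> (forall z, z < x -> F z < a) ->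
  Fwedge F a = x.
Proof.
move=> ha ax H; apply/eqP; rewrite eq_le W_lb //=.
have [hn _] := A_inf ha.
apply: lb_le_inf => // y /= ay; rewrite leNgt; apply/negP => /H.
by rewrite ltNge ay.
Qed.

End L.


Section M.
Context {R : realType} {F : R -> R}.
Hypothesis hF : distribution_function F.

Let F01 x : 0 <= F x <= 1. Proof. by case: hF. Qed.
Let Fnd : {homo F : x y / x <= y}. Proof. by case: hF. Qed.

Lemma J1 {x a} : jump_oo F x a -> unit_oo a /\ Fwedge F a = x.
Proof.
case/andP=> h1 h2.
have ua : unit_oo a.
  apply/andP; split; first exact: le_lt_trans (Fleft_ge0 hF x) h1.
  by case/andP: (F01 x) => _ /(lt_le_trans h2).
split => //; apply: (W_eq hF ua (ltW h2)) => z zx.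
exact: le_lt_trans (Fleft_ge hF zx) h1.
Qed.

Lemma J2 {a} : unit_oo a -> jump_cc F (Fwedge F a) a.
Proof. by move=> ua; apply/andP; split; [exact: W_Fleft|exact: W_ge]. Qed.

Lemma Flam_in {x l} : jumps F x -> unit_oo l -> jump_oo F x (Flam F l x).
Proof.
rewrite /jumps /unit_oo /jump_oo /Flam /= => Jx /andP[l0 l1]; apply/andP; split.
  by rewrite ltrDl mulr_gt0.
have -> : F x = Fleft F x + Fjump F x by rewrite /Fjump addrC subrK.
by rewrite ltrD2l gtr_pMl.
Qed.

Lemma Flam_inv {x a} : jump_oo F x a ->
  unit_oo ((a - Fleft F x) / Fjump F x) /\
  Flam F ((a - Fleft F x) / Fjump F x) x = a.
Proof.
rewrite /jump_oo /unit_oo /Flam /= => /andP[h1 h2].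
have J0 : 0 < Fjump F x by rewrite /Fjump subr_gt0 (lt_trans h1 h2).
split.
  apply/andP; split; first by rewrite divr_gt0 // subr_gt0.
  by rewrite ltr_pdivrMr // mul1r /Fjump ltrD2r.
by rewrite -mulrA mulVf ?gt_eqF // mulr1 addrC subrK.
Qed.

End M.

Theorem mainTheorem2 (R : realType) (F : R -> R) :
  distribution_function F ->
  (forall x : R,
      jump_oo F x `<=` [set a | unit_oo a /\ x = Fwedge F a] /\
      [set a | unit_oo a /\ x = Fwedge F a] `<=` jump_cc F x) /\
  (forall x1 x2 : R, x1 <> x2 -> jump_oo F x1 `&` jump_oo F x2 = set0) /\
  (\bigcup_(x in jumps F) jump_oo F x =
     [set a | unit_oo a /\ 0 < Fjump F (Fwedge F a) /\
              exists l, unit_oo l /\ a = Flam F l (Fwedge F a)] /\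
   \bigcup_(x in jumps F) jump_oo F x =
     [set a | exists l x, unit_oo l /\ jumps F x /\ a = Flam F l x] /\
   \bigcup_(x in jumps F) jump_oo F x =
     RF F @` (jumps F `*` unit_oo) /\
   \bigcup_(x in jumps F) jump_oo F x =
     unit_oo `\` (range F `|` range (Fleft F))) /\
  (forall (M : Type) (xs : M -> R),
      injective xs -> range xs = jumps F ->
      let Phi := fun (lam : M -> R) (n : M) => Flam F (lam n) (xs n) in
      let Psi := fun (alpha : M -> R) (n : M) =>
        (alpha n - Fleft F (Fwedge F (alpha n))) / Fjump F (Fwedge F (alpha n)) in
      let dom := [set lam : M -> R | forall n, unit_oo (lam n)] in
      let cod := [set alpha : M -> R | forall n, jump_oo F (xs n) (alpha n)] in
      set_bij dom cod Phi /\
      (forall alpha, cod alpha -> dom (Psi alpha) /\ Phi (Psi alpha) = alpha) /\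
      (forall lam, dom lam -> Psi (Phi lam) = lam)).
Proof.
move=> hF.
have Fnd : {homo F : x y / x <= y} by case: hF.
split.
  move=> x; split.
    by move=> a /(J1 hF) [ua <-].
  by move=> a [ua ->]; exact: J2.
split.
  move=> x1 x2 nx; rewrite -subset0 => a [/(J1 hF) [_ e1] /(J1 hF) [_ e2]].
  by apply: nx; rewrite -e1 -e2.
split; [split; [|split; [|split]]|].
  apply/seteqP; split => a.
    case=> x Jx ha; have [ua ew] := J1 hF ha.
    have [ul el] := Flam_inv ha.
    split => //; rewrite ew; split => //.
    by exists ((a - Fleft F x) / Fjump F x).
  case=> ua [Jw [l [ul ea]]]; exists (Fwedge F a) => //.
  by rewrite [X in jump_oo _ _ X]ea; exact: Flam_in.
apply/seteqP; split => a.
    case=> x Jx ha; have [ul el] := Flam_inv ha.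
    by exists ((a - Fleft F x) / Fjump F x), x.
  by case=> l [x [ul [Jx ->]]]; exists x => //; exact: Flam_in.
apply/seteqP; split => a.
    case=> x Jx ha; have [ul el] := Flam_inv ha.
    by exists (x, (a - Fleft F x) / Fjump F x).
  by case=> -[x l] [Jx ul] <-; exists x => //; exact: Flam_in.
apply/seteqP; split => a.
  case=> x Jx ha; have [ua ew] := J1 hF ha.
  move: ha; rewrite /jump_oo /= => /andP[h1 h2].
  split => //; case.
    case=> y _ Fy; have [yx|xy] := ltP y x.
      by have := le_lt_trans (Fleft_ge hF yx) h1; rewrite Fy ltxx.
    by have := lt_le_trans h2 (Fnd _ _ xy); rewrite Fy ltxx.
  case=> y _ Fy; have [xy|yx] := ltP x y.
    by have := lt_le_trans h2 (Fleft_ge hF xy); rewrite Fy ltxx.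
  by have := le_lt_trans (Fleft_mono hF yx) h1; rewrite Fy ltxx.
case=> ua nr; have /andP[h1 h2] := J2 hF ua.
have h1' : Fleft F (Fwedge F a) < a.
  rewrite lt_neqAle h1 andbT; apply/negP => /eqP e.
  by apply: nr; right; exists (Fwedge F a).
have h2' : a < F (Fwedge F a).
  rewrite lt_neqAle h2 andbT; apply/negP => /eqP e.
  by apply: nr; left; exists (Fwedge F a).
exists (Fwedge F a).
  by rewrite /jumps /Fjump /= subr_gt0 (lt_trans h1' h2').
by rewrite /jump_oo /= h1' h2'.
move=> M xs inj rng Phi Psi dom cod.
have Jxs n : jumps F (xs n) by rewrite -rng; exists n.
have PsiPhi : forall lam, dom lam -> Psi (Phi lam) = lam.
  move=> lam dl; apply/funext => n; rewrite /Psi /Phi.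
  have [_ ->] := J1 hF (Flam_in (Jxs n) (dl n)).
  have J0 : Fjump F (xs n) != 0 by rewrite gt_eqF //; exact: Jxs.
  by rewrite /Flam addrAC subrr add0r mulfK.
have PhiPsi : forall alpha, cod alpha -> dom (Psi alpha) /\ Phi (Psi alpha) = alpha.
  move=> alpha ca.
  have e n : Psi alpha n = (alpha n - Fleft F (xs n)) / Fjump F (xs n).
    by rewrite /Psi; have [_ ->] := J1 hF (ca n).
  split.
    by move=> n; rewrite e; have [] := Flam_inv (ca n).
  apply/funext => n; rewrite /Phi e; have [] := Flam_inv (ca n); done.
split; last by [].
split.
- by move=> lam dl n; exact: Flam_in.
- move=> l1 l2 /set_mem d1 /set_mem d2 e.
  by rewrite -(PsiPhi _ d1) e PsiPhi.
- by move=> alpha ca; exists (Psi alpha); [exact: (PhiPsi _ ca).1|exact: (PhiPsi _ ca).2].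
Qed.
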